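(* For every institution $s$, the aggregate choice rule $\mathcal{C}^h_s$ is fair: for every $Y\subseteq X$ and every $x\in Y_s$ with $\mathbf{i}(x)\notin\mathbf{i}(\mathcal{C}^h_s(Y))$, every $y\in\mathcal{C}^h_s(Y)$ satisfies at least one of: (1) $\mathbf{i}(y)\succ_{s}\mathbf{i}(x)$; (2) $\mathbf{t}(x)\neq\mathbf{t}(y)$; (3) $\rho(\mathbf{i}(y))\setminus\rho(\mathbf{i}(x))\neq\emptyset$.
   Context: Model. $I$ finite set of individuals, $S$ finite set of institutions. Reserve categories $R=\{SC,ST,OBC,EWS\}$, position types $V=\{o\}\cup R$ ($o$ = open category). Institution $s$ has $q_s^r$ positions reserved for $r\in R$ and $q_s^o$ open positions. Individual $i$ has vertical membership $t(i)\in R\cup\{g\}$ ($g$ = general). Institution $s$ has a strict merit ranking $\succ_s$ of $I$. Contracts $X$: triples $(i,s,v)$ with $v=o$, or $v=t(i)$ if $t(i)\in R$; $\mathbf{i}(x),\mathbf{s}(x),\mathbf{t}(x)$ denote individual, institution, category; $Y_s=\{x\in Y:\mathbf{s}(x)=s\}$, $\mathbf{i}(Y)=\{\mathbf{i}(x):x\in Y\}$. $H=\{h_1,\dots,h_L\}$ horizontal types, $\rho(i)\subseteq H$ types of $i$, $\rho^{-1}(h)=\{i:h\in\rho(i)\}$; hierarchical: if $\rho^{-1}(h)\cap\rho^{-1}(h')\neq\emptyset$ then one of $\rho^{-1}(h),\rho^{-1}(h')$ is a strict subset of the other ($h$ contains $h'$ if $\rho^{-1}(h')\subsetneq\rho^{-1}(h)$).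 For each $s$ and $v\in V$, $\kappa^s_v=(\kappa^s_{v,j})_{j}\in\mathbb{Z}_+^L$ are horizontal reservations within category $v$ at $s$; a chosen individual counts against every type she has. Hierarchical choice rule $C^h(A,\kappa,\rho)$ with capacity $q$ and ranking $\succ$: Step 1: let $H^1$ be the types containing no other type. If no individual in $A$ has a horizontal type, choose the $\min(q,|A|)$ highest-ranked and stop. Otherwise for each $h_j\in H^1$ (in a fixed order, not exceeding remaining positions) choose all not-yet-chosen type-$h_j$ individuals of $A$ if at most $\kappa_j$, else the $\kappa_j$ highest-ranked; reduce remaining positions and the reservation of each type containing $h_j$ by the number chosen (floored at 0); remove $h_j$. Step $n\ge2$: stop if no positions or individuals remain; if no type remains, fill remaining positions with the highest-ranked remaining individuals and stop; otherwise process the remaining types containing no other remaining type as in Step 1 with updated reservations. Output: all individuals chosen. Aggregate choice rule $\mathcal{C}^h_s$: given $Y\subseteq X$, categories are processed in the order $o,SC,ST,OBC,EWS$. For category $v$, let $A_v$ be the set of individuals who have a contract $(i,s,v)\in Y$ and who were not chosen by any earlier category; apply $C^h(A_v,\kappa^s_v,\rho)$ with capacity $q_s^v$ and ranking $\succ_s$, and select the contracts $(i,s,v)$ of the chosen individuals. $\mathcal{C}^h_s(Y)$ is the union of the selected contracts over all categories. *)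

(* Defs.v *)
From HB Require Import structures.
From mathcomp Require Import all_boot all_order.
Set Implicit Arguments. Unset Strict Implicit. Unset Printing Implicit Defensive.

Inductive rcat := SC | ST | OBC | EWS.
Inductive pos := Open | Res of rcat.

Definition pos_to_ord (v : pos) : 'I_5 :=
  match v with
  | Open => inord 0 | Res SC => inord 1 | Res ST => inord 2
  | Res OBC => inord 3 | Res EWS => inord 4 end.
Definition ord_to_pos (k : 'I_5) : pos :=
  match val k with
  | 0 => Open | 1 => Res SC | 2 => Res ST | 3 => Res OBC | _ => Res EWS end.
Lemma pos_to_ordK : cancel pos_to_ord ord_to_pos.
Proof. by case=> [|[]]; rewrite /ord_to_pos /= inordK. Qed.
HB.instance Definition _ := Equality.copy pos (can_type pos_to_ordK).
HB.instance Definition _ := Choice.copy pos (can_type pos_to_ordK).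
HB.instance Definition _ := Countable.copy pos (can_type pos_to_ordK).
HB.instance Definition _ := Finite.copy pos (can_type pos_to_ordK).

(* A strict (total) merit ranking: [succ a b] means "a is ranked above b". *)
Definition strict_ranking (I : finType) (succ : rel I) : Prop :=
  [/\ irreflexive succ, transitive succ &
      forall a b, a != b -> succ a b || succ b a].

(* The k highest-ranked members of A (all of A if |A| <= k). *)
Definition top (I : finType) (succ : rel I) (k : nat) (A : {set I}) : {set I} :=
  [set i in A | #|[set j in A | succ j i]| < k].

Section Horizontal.
Variables (I : finType) (n : nat) (rho : I -> {set 'I_n}).

Definition tinv (h : 'I_n) : {set I} := [set i | h \in rho i].
Definition hcontains (h h' : 'I_n) : bool := tinv h' \proper tinv h.

Definition hierarchical : Prop :=
  forall h h' : 'I_n, h != h' -> tinv h :&: tinv h' != set0 ->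
    tinv h \proper tinv h' \/ tinv h' \proper tinv h.

Variables (succ : rel I) (A : {set I}).

(* state: (chosen individuals, remaining positions, current reservations) *)
Definition hstate := ({set I} * nat * ('I_n -> nat))%type.

Definition proc_type (st : hstate) (h : 'I_n) : hstate :=
  let: (ch, r, kap) := st in
  let avail := [set i in A | (h \in rho i) && (i \notin ch)] in
  let new := top succ (minn (kap h) r) avail in
  let m := #|new| in
  (ch :|: new, r - m,
   fun h' => if hcontains h' h then kap h' - m else kap h').

Fixpoint hsteps (fuel : nat) (st : hstate) (R : {set 'I_n}) : {set I} :=
  match fuel with
  | 0 => st.1.1
  | fuel'.+1 =>
    let: (ch, r, kap) := st in
    if (r == 0) || (A :\: ch == set0) then ch
    else if R == set0 then ch :|: top succ r (A :\: ch)
    else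
      let M := [set h in R | [forall h' in R, ~~ hcontains h h']] in
      hsteps fuel' (foldl proc_type st (enum M)) (R :\: M)
  end.

Definition hchoice (q : nat) (kappa : 'I_n -> nat) : {set I} :=
  if [forall i in A, rho i == set0] then top succ q A
  else hsteps n.+2 (set0, q, kappa) setT.

End Horizontal.

Section Aggregate.
Variables (I S : finType) (n : nat) (t : I -> option rcat)
  (rho : I -> {set 'I_n}) (succ : S -> rel I)
  (q : S -> pos -> nat) (kappa : S -> pos -> 'I_n -> nat).

Definition contract := (I * S * pos)%type.
Definition ci (x : contract) : I := x.1.1.
Definition cs (x : contract) : S := x.1.2.
Definition ct (x : contract) : pos := x.2.

Definition contractX : {set contract} :=
  [set x : contract | (ct x == Open) ||
     match t (ci x) with Some r => ct x == Res r | None => false end].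

Definition cat_order : seq pos := [:: Open; Res SC; Res ST; Res OBC; Res EWS].

Definition agg_step (s : S) (Y : {set contract})
    (st : {set I} * {set contract}) (v : pos) : {set I} * {set contract} :=
  let: (chI, chX) := st in
  let Av := [set i | ((i, s, v) \in Y) && (i \notin chI)] in
  let C := hchoice rho (succ s) Av (q s v) (kappa s v) in
  (chI :|: C, chX :|: [set ((i, s, v) : contract) | i in C]).

Definition Cagg (s : S) (Y : {set contract}) : {set contract} :=
  (foldl (agg_step s Y) (set0, set0) cat_order).2.

End Aggregate.

(* Main.v *)
Require Import Defs.
From HB Require Import structures.
From mathcomp Require Import all_boot all_order.
Set Implicit Arguments. Unset Strict Implicit. Unset Printing Implicit Defensive.

Lemma top_sub (I : finType) (succ : rel I) k (B : {set I}) : top succ k B \subset B.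
Proof. by apply/subsetP=> i; rewrite inE => /andP[]. Qed.

Lemma top_up (I : finType) (succ : rel I) k (B : {set I}) a b :
  transitive succ -> a \in B -> b \in top succ k B -> succ a b -> a \in top succ k B.
Proof.
move=> tr aB; rewrite !inE => /andP[bB hb] ab; rewrite aB /=.
apply: leq_ltn_trans hb; apply: subset_leq_card; apply/subsetP=> j.
rewrite !inE => /andP[-> ja] /=; exact: tr ja ab.
Qed.

Section H.
Variables (I : finType) (n : nat) (rho : I -> {set 'I_n}) (succ : rel I) (A : {set I}).
Hypothesis tr : transitive succ.
Variables (a : I).
Hypothesis aA : a \in A.

Lemma foldl_mono (hs : seq 'I_n) (st : hstate I n) : st.1.1 \subset (foldl (proc_type rho succ A) st hs).1.1.
Proof.
elim: hs st => [|h hs IH] [[ch r] kap] //=.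
apply: subset_trans (IH _); rewrite /proc_type /=; exact: subsetUl.
Qed.

Lemma hsteps_mono fuel (st : hstate I n) R : st.1.1 \subset hsteps rho succ A fuel st R.
Proof.
elim: fuel st R => [|f IH] [[ch r] kap] R //=.
case: ifP=> // _; case: ifP=> _; first exact: subsetUl.
apply: subset_trans (IH _ _); exact: (foldl_mono _ (ch, r, kap)).
Qed.

Lemma foldl_fair (hs : seq 'I_n) (st : hstate I n) b :
  a \notin (foldl (proc_type rho succ A) st hs).1.1 ->
  b \in (foldl (proc_type rho succ A) st hs).1.1 ->
  succ a b -> rho b \subset rho a -> b \in st.1.1.
Proof.
elim: hs st => [|h hs IH] [[ch r] kap] //= na hb ab sub.
have na' : a \notin (proc_type rho succ A (ch, r, kap) h).1.1.
  apply: contra na; apply/subsetP; exact: foldl_mono.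
have := IH _ na hb ab sub; rewrite /proc_type /= inE => /orP[//|bt].
exfalso; move: na'; rewrite /= inE negb_or => /andP[nch]; apply/negP/negPn.
have hb' : h \in rho b by move: (subsetP (top_sub _ _ _) _ bt); rewrite inE => /and3P[].
refine (top_up tr _ bt ab).
by rewrite inE aA nch (subsetP sub _ hb').
Qed.

Lemma hsteps_fair fuel (st : hstate I n) R b :
  a \notin hsteps rho succ A fuel st R -> b \in hsteps rho succ A fuel st R ->
  succ a b -> rho b \subset rho a -> b \in st.1.1.
Proof.
elim: fuel st R => [|f IH] [[ch r] kap] R //=.
case: ifP=> // _; case: ifP=> _.
  move=> na hb ab _; apply/negPn/negP => nch.
  have nch' : a \notin ch by apply: contra na => h; rewrite in_setU h.
  have bt : b \in top succ r (A :\: ch) by move: hb; rewrite in_setU (negbTE nch).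
  move/negP: na; apply; rewrite in_setU; apply/orP; right.
  refine (top_up tr _ bt ab); by rewrite in_setD nch' aA.
set st' := foldl _ _ _ => na hb ab sub.
have na' : a \notin st'.1.1 by apply: contra na; apply/subsetP; exact: hsteps_mono.
exact: (foldl_fair na' (IH _ _ na hb ab sub) ab sub).
Qed.

Lemma hchoice_fair q kappa b :
  a \notin hchoice rho succ A q kappa -> b \in hchoice rho succ A q kappa ->
  succ a b -> rho b \subset rho a -> False.
Proof.
rewrite /hchoice; case: ifP=> _.
  move=> na bt ab _; move/negP: na; apply; exact: top_up tr aA bt ab.
move=> na hb ab sub; have := hsteps_fair na hb ab sub; by rewrite inE.
Qed.
End H.

Section Agg.
Variables (I S : finType) (n : nat)
  (rho : I -> {set 'I_n}) (succ : S -> rel I)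
  (q : S -> pos -> nat) (kappa : S -> pos -> 'I_n -> nat) (s : S) (Y : {set contract I S}).

Lemma agg_inv (vs : seq pos) (st : {set I} * {set contract I S}) : st.1 \subset (@ci I S) @: st.2 ->
  (foldl (agg_step rho succ q kappa s Y) st vs).1 \subset
  (@ci I S) @: (foldl (agg_step rho succ q kappa s Y) st vs).2.
Proof.
elim: vs st => [|v vs IH] [chI chX] //= H; apply: IH => /=.
rewrite imsetU; apply: setUSS => //; apply/subsetP=> i iC.
by apply/imsetP; exists (i, s, v) => //; apply/imsetP; exists i.
Qed.

Lemma agg_mono (vs : seq pos) (st : {set I} * {set contract I S}) : st.1 \subset (foldl (agg_step rho succ q kappa s Y) st vs).1.
Proof.
elim: vs st => [|v vs IH] [chI chX] //=; apply: subset_trans (IH _); exact: subsetUl.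
Qed.

Hypothesis tr : transitive (succ s).

Lemma agg_fair (vs : seq pos) (st : {set I} * {set contract I S}) (a : I) y :
  (a, s, ct y) \in Y ->
  a \notin (foldl (agg_step rho succ q kappa s Y) st vs).1 ->
  y \in (foldl (agg_step rho succ q kappa s Y) st vs).2 ->
  succ s a (ci y) -> rho (ci y) \subset rho a -> y \in st.2.
Proof.
elim: vs st => [|v vs IH] [chI chX] //= xY na hy ab sub.
have na' : a \notin (agg_step rho succ q kappa s Y (chI, chX) v).1.
  apply: contra na; apply/subsetP; exact: agg_mono.
have := IH _ xY na hy ab sub; rewrite /= inE => /orP[//|/imsetP[i iC ey]].
exfalso; move: na'; rewrite /= inE negb_or => /andP[nch nC].
subst y; rewrite /ci /= in ab sub; rewrite /ct /= in xY.
apply: (hchoice_fair tr _ nC iC ab sub); by rewrite inE xY nch.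
Qed.
End Agg.

Theorem theorem2 (I S : finType) (n : nat) (t : I -> option rcat)
  (rho : I -> {set 'I_n}) (succ : S -> rel I)
  (q : S -> pos -> nat) (kappa : S -> pos -> 'I_n -> nat) :
  (forall s, strict_ranking (succ s)) ->
  hierarchical rho ->
  forall (s : S) (Y : {set contract I S}),
    Y \subset @contractX I S t ->
    forall x : contract I S, x \in Y -> cs x = s ->
      ci x \notin [set ci y | y in Cagg rho succ q kappa s Y] ->
      forall y, y \in Cagg rho succ q kappa s Y ->
        [\/ succ s (ci y) (ci x), ct x != ct y | rho (ci y) :\: rho (ci x) != set0].
Proof.
move=> hr _ s Y _ x xY xs nx y hy.
case: (hr s) => irr tr tot.
case: (boolP (succ s (ci y) (ci x))) => [h|nyx]; first by apply: Or31.
case: (boolP (ct x != ct y)) => [h|/negPn/eqP exy]; first by apply: Or32.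
case: (boolP (rho (ci y) :\: rho (ci x) != set0)) => [h|/negPn]; first by apply: Or33.
rewrite setD_eq0 => sub; exfalso.
have neq : ci x != ci y.
  apply: contraNneq nx => ->; by apply/imsetP; exists y.
have ab : succ s (ci x) (ci y) by move: (tot _ _ neq); rewrite (negbTE nyx) orbF.
have xY' : (ci x, s, ct y) \in Y by rewrite -exy -xs; have -> : (ci x, cs x, ct x) = x by case: (x) => [[]].
have na : ci x \notin (foldl (agg_step rho succ q kappa s Y) (set0, set0) cat_order).1.
  apply: contra nx; apply/subsetP; apply: agg_inv; exact: sub0set.
have := agg_fair tr xY' na hy ab sub; by rewrite inE.
Qed.
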